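(* Let $d\ge 2$. There are a constant $C>0$ and $n_0(d)$ depending only on $d$ such that for all $n\ge n_0(d)$: if $\mathcal{F}$, $B_i$ are as in the context, $J\subseteq[n]$ with $|J|\le n/4$, and $K\ge 0$ is a real number with $|E(\mathcal{G}_J)|\ge\binom{n-|J|}{d}-Kn$, then $$|\mathcal{T}_J^2\cup\mathcal{T}_J^3|\le\binom{n-|J|}{d}+C\left(K+\sqrt{Kn^{d-1}}+n^{d-2}\right).$$
   Context: Let $\mathcal{F}=\{F_1,\dots,F_m\}\subseteq\binom{[n]}{d+1}$ consist of distinct sets and have VC-dimension at most $d$ (no $(d+1)$-set $S$ is shattered, i.e. no $S$ such that every $A\subseteq S$ equals $F\cap S$ for some $F\in\mathcal{F}$). For $i\in[m]$, call $B\subsetneq F_i$ admissible for $F_i$ if $F\cap F_i\neq B$ for every $F\in\mathcal{F}$. For each $i$, $B_i$ is a fixed admissible set for $F_i$ of maximum cardinality among all admissible sets. For $J\subseteq[n]$, $\mathcal{G}_J$ is the $d$-uniform hypergraph on vertex set $[n]\setminus J$ with edge set $E(\mathcal{G}_J):=\{F_k\setminus J: k\in[m],\ |F_k\cap J|=1\}$. $\mathcal{T}_J^2$ is the set of $F_k\in\mathcal{F}$ with $B_k\subseteq[n]\setminus J$ and $|B_k|=d$; $\mathcal{T}_J^3$ is the set of $F_k\in\mathcal{F}$ with $|F_k\cap J|=1$, $B_k\subseteq[n]\setminus J$ and $|B_k|=d-1$. *)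

(* Defs.v *)
From mathcomp Require Import all_boot.
From Stdlib Require Import Reals.
Set Implicit Arguments. Unset Strict Implicit. Unset Printing Implicit Defensive.

Definition shatters (n m : nat) (F : 'I_m -> {set 'I_n}) (S : {set 'I_n}) : Prop :=
  forall A : {set 'I_n}, A \subset S -> exists k : 'I_m, F k :&: S = A.

Definition VCdim_le (n m : nat) (F : 'I_m -> {set 'I_n}) (d : nat) : Prop :=
  forall S : {set 'I_n}, #|S| = d.+1 -> ~ shatters F S.

Definition admissible (n m : nat) (F : 'I_m -> {set 'I_n}) (i : 'I_m)
  (B : {set 'I_n}) : Prop :=
  B \proper F i /\ forall k : 'I_m, F k :&: F i <> B.

Definition edges_G (n m : nat) (F : 'I_m -> {set 'I_n}) (J : {set 'I_n})
  : {set {set 'I_n}} :=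
  [set F k :\: J | k : 'I_m & #|F k :&: J| == 1].

Definition T2 (n m : nat) (F B : 'I_m -> {set 'I_n}) (J : {set 'I_n}) (d : nat)
  : {set {set 'I_n}} :=
  [set F k | k : 'I_m & (B k \subset ~: J) && (#|B k| == d)].

Definition T3 (n m : nat) (F B : 'I_m -> {set 'I_n}) (J : {set 'I_n}) (d : nat)
  : {set {set 'I_n}} :=
  [set F k | k : 'I_m & [&& #|F k :&: J| == 1, B k \subset ~: J & #|B k| == d.-1]].

(* Main.v *)
Require Import Defs.
From Stdlib Require Import Reals Lia Lra.
From Stdlib Require ZArith.
From mathcomp Require Import all_boot zify.
Set Implicit Arguments. Unset Strict Implicit. Unset Printing Implicit Defensive.


Lemma card_indic (B : finType) (Y : {set B}) (P : pred B) :
  #|[set y in Y | P y]| = \sum_(y : B) ((y \in Y) && P y : nat).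
Proof.
rewrite -sum1_card big_mkcond /=; apply: eq_bigr => y _.
by rewrite inE; case: (_ && _).
Qed.

Lemma dcount (A B : finType) (X : {set A}) (Y : {set B}) (R : A -> B -> bool) :
  \sum_(x in X) #|[set y in Y | R x y]| = \sum_(y in Y) #|[set x in X | R x y]|.
Proof.
transitivity (\sum_(x : A) \sum_(y : B) ((x \in X) && ((y \in Y) && R x y) : nat)).
  rewrite big_mkcond /=; apply: eq_bigr => x _; rewrite card_indic.
  by case: (x \in X) => //=; rewrite big1.
rewrite exchange_big /= [RHS]big_mkcond /=; apply: eq_bigr => y _.
rewrite card_indic; case: (y \in Y) => /=; last by rewrite big1 // => x _; rewrite andbF.
by apply: eq_bigr => x _; case: (x \in X).
Qed.

Lemma dc_bound (A B : finType) (X : {set A}) (Y : {set B}) (R : A -> B -> bool) a b :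
  (forall x, x \in X -> a <= #|[set y in Y | R x y]|) ->
  (forall y, y \in Y -> #|[set x in X | R x y]| <= b) ->
  a * #|X| <= b * #|Y|.
Proof.
move=> HX HY.
have -> : a * #|X| = \sum_(x in X) a by rewrite sum_nat_const mulnC.
have -> : b * #|Y| = \sum_(y in Y) b by rewrite sum_nat_const mulnC.
apply: (@leq_trans (\sum_(x in X) #|[set y in Y | R x y]|)).
  by apply: leq_sum => x xX; exact: HX.
rewrite dcount; exact: leq_sum.
Qed.

Lemma ffact_le_exp n k : n ^_ k <= n ^ k.
Proof.
elim: k => [|k IH]; first by rewrite ffactn0.
by rewrite ffactnSr expnS mulnC leq_mul // leq_subr.
Qed.

Lemma bin_le_exp n k : 'C(n, k) <= n ^ k.
Proof.
apply: leq_trans (ffact_le_exp n k); rewrite -bin_ffact leq_pmulr //.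
exact: fact_gt0.
Qed.

Lemma three_elems (T : finType) (X : {set T}) : 2 < #|X| ->
  exists a b c, [/\ a \in X, b \in X, c \in X & [/\ a != b, a != c & b != c]].
Proof.
move=> H; have /card_gt0P [a aX] : 0 < #|X| by apply: leq_ltn_trans H.
have H1 : 1 < #|X :\ a| by rewrite (cardsD1 a) aX in H.
have /card_gt0P [b bX] : 0 < #|X :\ a| by apply: leq_ltn_trans H1.
have H2 : 0 < #|X :\ a :\ b| by rewrite (cardsD1 b) bX in H1.
have /card_gt0P [c cX] := H2.
move: bX cX; rewrite !inE => /andP [ba bX] /and3P [cb ca cX].
exists a, b, c; split => //; split; by rewrite eq_sym.
Qed.

Lemma setD2_eq (T : finType) (S : {set T}) x1 x2 : x1 \in S -> x2 \in S -> x1 != x2 ->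
  S :\ x1 = x2 |: (S :\: [set x1; x2]) /\ S = x2 |: (x1 |: (S :\: [set x1; x2])).
Proof.
move=> h1 h2 n12; have n21 : x2 != x1 by rewrite eq_sym.
split; apply/setP => z; rewrite !inE.
  case: (eqVneq z x2) => [->|z2]; first by rewrite h2 n21.
  by case: (eqVneq z x1).
case: (eqVneq z x2) => [->|z2]; first by rewrite h2.
by case: (eqVneq z x1) => [->|z1]; rewrite ?h1 //=; rewrite orbF.
Qed.

Lemma three_in_two (T : finType) (X : {set T}) a b c : a \in X -> b \in X -> c \in X ->
  a != b -> a != c -> b != c -> #|X| <= 2 -> False.
Proof.
move=> aX bX cX ab ac bc h.
have sub : a |: (b |: [set c]) \subset X by rewrite !subUset !sub1set aX bX cX.
move: (subset_leq_card sub); rewrite !cardsU1 cards1 !inE (negbTE ab) (negbTE ac) (negbTE bc) /=.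
by move=> h'; move: (leq_trans h' h).
Qed.

Lemma nat_lam L M N : (M - 1) * M <= 2 * N -> L * M <= L + L * L + 2 * N.
Proof.
move=> h; case: (leqP M L.+1) => hM.
  have : L * M <= L * L.+1 by rewrite leq_mul2l hM orbT.
  nia.
case: M h hM => [|M] h hM //=.
rewrite subn1 /= in h; nia.
Qed.

Lemma pair_inter (T : finType) (Z S : {set T}) w u : w \in S -> w \notin Z -> u \notin S ->
  ((w |: (u |: Z)) :\: Z) :&: S = [set w].
Proof.
move=> wS wZ uS; apply/setP => z; rewrite !inE.
case: (eqVneq z w) => [->|zw]; first by rewrite wZ wS.
case: (eqVneq z u) => [->|zu] /=; first by rewrite (negbTE uS) andbF.
by case: (z \in Z).
Qed.


Lemma ar1 k : 0 < k -> k <= k.-1 -> False. Proof. lia. Qed.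
Lemma ar2 k : 0 < k -> 1 + (1 + (1 + k.-1)) <= k.+1 -> False. Proof. lia. Qed.
Lemma ar3 k : 1 < k -> k - k.-1 == 1. Proof. lia. Qed.
Lemma ar4 k : 1 < k -> k = k.-1 -> False. Proof. lia. Qed.
Lemma ar6 k : 1 < k -> k - (k - 2) <= 2. Proof. lia. Qed.
Lemma ar7 k : 1 < k -> 1 + (1 + (k - 2)) == k. Proof. move=> h; apply/eqP; lia. Qed.
Lemma ar5 k : 1 < k -> 1 + k.-1 = k. Proof. lia. Qed.

Section Main.
Variables (n m d : nat) (z0 : 'I_n) (F B : 'I_m -> {set 'I_n}) (J : {set 'I_n}).
Hypotheses (d2 : 2 <= d) (Finj : injective F) (Fcard : forall i, #|F i| = d.+1)
  (adm : forall i, admissible F i (B i))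
  (maxB : forall i B', admissible F i B' -> #|B'| <= #|B i|).

Let V := ~: J.
Definition I2 := [set k | (B k \subset V) && (#|B k| == d)].
Definition I3 := [set k | [&& #|F k :&: J| == 1, B k \subset V & #|B k| == d.-1]].
Definition Sk k := F k :\: J.
Definition jk k := odflt z0 [pick z in F k :&: J].
Definition xk k := odflt z0 [pick z in Sk k :\: B k].

Lemma pick1 (A : {set 'I_n}) : #|A| == 1 -> A = [set odflt z0 [pick z in A]].
Proof.
move/cards1P=> [a ->]; case: pickP => [y|/(_ a)]; last by rewrite inE eqxx.
by rewrite inE => /eqP ->.
Qed.

Lemma in_I3 k : k \in I3 ->
  [/\ #|F k :&: J| = 1, B k \subset V & #|B k| = d.-1].
Proof. by rewrite inE => /and3P [/eqP -> -> /eqP ->]. Qed.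

Lemma BsubF k : B k \subset F k.
Proof. by case: (adm k) => /properP []. Qed.

Lemma jk_spec k : k \in I3 -> F k :&: J = [set jk k].
Proof. by case/in_I3 => h _ _; apply: pick1; rewrite h. Qed.

Lemma jk_FJ k : k \in I3 -> jk k \in F k /\ jk k \in J.
Proof. move=> /jk_spec h; have : jk k \in F k :&: J by rewrite h set11.
by rewrite inE => /andP. Qed.

Lemma Sk_card k : k \in I3 -> #|Sk k| = d.
Proof.
move=> kI; have := cardsID J (F k); rewrite (jk_spec kI) cards1 Fcard /Sk.
by move=> [].
Qed.

Lemma B_sub_S k : k \in I3 -> B k \subset Sk k.
Proof. by case/in_I3=> _ BV _; rewrite /Sk setDE subsetI BsubF. Qed.

Lemma xk_spec k : k \in I3 -> Sk k :\: B k = [set xk k].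
Proof.
move=> kI; apply: pick1; rewrite cardsD (setIidPr (B_sub_S kI)) (Sk_card kI).
case/in_I3: kI => _ _ ->; exact: ar3.
Qed.

Lemma S_eq k : k \in I3 -> Sk k = xk k |: B k.
Proof.
move=> kI; by rewrite -{1}(setID (Sk k) (B k)) (setIidPr (B_sub_S kI)) (xk_spec kI) setUC.
Qed.

Lemma xk_notB k : k \in I3 -> xk k \notin B k.
Proof. move=> kI; have : xk k \in Sk k :\: B k by rewrite (xk_spec kI) set11.
by rewrite inE => /andP []. Qed.

Lemma xk_V k : k \in I3 -> xk k \in V.
Proof. move=> kI; have : xk k \in Sk k :\: B k by rewrite (xk_spec kI) set11.
by rewrite !inE => /andP [_ /andP []]. Qed.

Lemma F_eq k : k \in I3 -> F k = jk k |: Sk k.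
Proof.
move=> kI; by rewrite /Sk -(jk_spec kI) setID.
Qed.

Lemma coloring k k' : k \in I3 -> B k \subset F k' -> (xk k \in F k') || (jk k \in F k').
Proof.
move=> kI sub; apply/negPn/negP; rewrite negb_or => /andP [nx nj].
case: (adm k) => _ /(_ k'); apply; apply/setP => y; rewrite inE.
apply/andP/idP => [[yk' yk]|yB]; last by split; [exact: (subsetP sub) | exact: (subsetP (BsubF k))].
move: yk; rewrite (F_eq kI) (S_eq kI) !inE => /or3P [/eqP E|/eqP E|//].
  by move: nj; rewrite -E yk'.
by move: nx; rewrite -E yk'.
Qed.

Lemma two_sets k k' (D : {set 'I_n}) : D \subset F k -> D \subset F k' -> k != k' -> #|D| = d ->
  F k' :&: F k = D.
Proof.
move=> s1 s2 kk' cD; apply/eqP; rewrite eq_sym eqEcard subsetI s2 s1 /= cD.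
have : #|F k' :&: F k| <= d.+1 by rewrite -(Fcard k) subset_leq_card // subsetIr.
rewrite leq_eqVlt ltnS => /orP [/eqP E|//].
have E1 : F k' :&: F k = F k.
  by apply/eqP; rewrite eqEcard subsetIr E Fcard leqnn.
have E2 : F k' :&: F k = F k'.
  by apply/eqP; rewrite eqEcard subsetIl E Fcard leqnn.
by move: kk'; rewrite (Finj (etrans (esym E1) E2)) eqxx.
Qed.

Definition Dsets := [set D : {set 'I_n} | (D \subset V) && (#|D| == d)].
Definition NE := [set D in Dsets | D \notin edges_G F J].
Definition Im3 := [set Sk k | k in I3].

Lemma S_edge k : k \in I3 -> Sk k \in edges_G F J.
Proof. move=> kI; apply/imsetP; exists k; last done; case: (in_I3 kI) => h _ _; by rewrite inE h. Qed.

Lemma S_Dsets k : k \in I3 -> Sk k \in Dsets.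
Proof.
move=> kI; rewrite inE (Sk_card kI) eqxx andbT /Sk /V.
by apply/subsetP => y; rewrite !inE => /andP [].
Qed.

Lemma card_V : #|V| = n - #|J|.
Proof. by rewrite /V cardsCs setCK card_ord. Qed.

Lemma card_Dsets : #|Dsets| = 'C(n - #|J|, d).
Proof. by rewrite -card_V -cards_draws. Qed.

Lemma edges_Dsets : edges_G F J \subset Dsets.
Proof.
apply/subsetP => D /imsetP [k]; rewrite inE => c1 ->.
rewrite inE; apply/andP; split; first by apply/subsetP => y; rewrite !inE => /andP [].
have := cardsID J (F k); rewrite (eqP c1) Fcard => [[<-]] //.
Qed.

Lemma card_NE : #|NE| + #|edges_G F J| = 'C(n - #|J|, d).
Proof.
rewrite -card_Dsets -(cardsID (edges_G F J) Dsets) (setIidPr edges_Dsets) addnC.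
congr (_ + _); apply: eq_card => D; rewrite !inE andbC //.
Qed.

Lemma main1 : #|I2| + #|Im3| <= 'C(n - #|J|, d).
Proof.
have inj : {in I2 &, injective B}.
  move=> k k' kI k'I E; apply/eqP; apply/negPn/negP => kk'.
  case: (adm k) => _ /(_ k'); apply; apply: two_sets => //; first exact: BsubF.
    by rewrite E BsubF.
  by move: kI; rewrite inE => /andP [_ /eqP].
rewrite -(card_in_imset inj) -card_Dsets.
have disj : [disjoint [set B k | k in I2] & Im3].
  rewrite -setI_eq0; apply/eqP/setP => D; rewrite !inE; apply/negP => /andP [].
  move=> /imsetP [k kI ->] /imsetP [k' k'I E].
  have kk' : k != k'.
    apply/negP => /eqP Ek; move: kI k'I; rewrite Ek !inE => /andP [_ /eqP c1] /and3P [_ _ /eqP c2].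
    by move: c2; rewrite c1; apply: ar4.
  case: (adm k) => _ /(_ k'); apply; apply: two_sets => //; first exact: BsubF.
    by rewrite E /Sk subsetDl.
  by move: kI; rewrite inE => /andP [_ /eqP].
have E : #|[set B k | k in I2] :|: Im3| = #|[set B k | k in I2]| + #|Im3|.
  by rewrite cardsU; move: disj; rewrite -setI_eq0 => /eqP ->; rewrite cards0 subn0.
rewrite -E; apply: subset_leq_card; rewrite subUset; apply/andP; split.
  apply/subsetP => D /imsetP [k]; rewrite inE => kI ->; by rewrite inE.
by apply/subsetP => D /imsetP [k kI ->]; exact: S_Dsets.
Qed.

Lemma same_S_j k k' : k \in I3 -> k' \in I3 -> Sk k = Sk k' -> jk k = jk k' -> k = k'.
Proof. by move=> kI k'I E1 E2; apply: Finj; rewrite (F_eq kI) (F_eq k'I) E1 E2. Qed.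

Lemma B_eq k : k \in I3 -> B k = Sk k :\ xk k.
Proof. by move=> kI; rewrite (S_eq kI) setU1K // xk_notB. Qed.

Lemma jk_notV k : k \in I3 -> jk k \notin V.
Proof. by move=> /jk_FJ [_ h]; rewrite /V inE h. Qed.

Lemma notin_B k k' : k \in I3 -> k' \in I3 -> jk k \notin B k'.
Proof.
move=> kI /in_I3 [_ BV _]; apply/negP => h.
by move: (jk_notV kI); rewrite (subsetP BV).
Qed.

Lemma x_ne_j k k' : k \in I3 -> k' \in I3 -> xk k != jk k'.
Proof. by move=> kI k'I; apply/eqP => E; move: (xk_V kI); rewrite E (negbTE (jk_notV k'I)). Qed.

Lemma fiber3 k1 k2 k3 : k1 \in I3 -> k2 \in I3 -> k3 \in I3 ->
  k1 != k2 -> k1 != k3 -> k2 != k3 ->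
  Sk k1 = Sk k2 -> Sk k1 = Sk k3 -> xk k1 = xk k2 -> xk k1 = xk k3 -> False.
Proof.
move=> I1 I2' I3' n12 n13 n23 S12 S13 x12 x13.
have B12 : B k2 = B k1 by rewrite (B_eq I1) (B_eq I2') S12 x12.
have B13 : B k3 = B k1 by rewrite (B_eq I1) (B_eq I3') S13 x13.
have j12 : jk k1 != jk k2 by apply/eqP => E; move: n12; rewrite (same_S_j I1 I2' S12 E) eqxx.
have j13 : jk k1 != jk k3 by apply/eqP => E; move: n13; rewrite (same_S_j I1 I3' S13 E) eqxx.
have j23 : jk k2 != jk k3.
  by apply/eqP => E; move: n23; rewrite (same_S_j I2' I3' (etrans (esym S12) S13) E) eqxx.
set A' := jk k1 |: B k1.
have A'F : A' \subset F k1 by rewrite subUset sub1set (jk_FJ I1).1 BsubF.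
have xF : xk k1 \in F k1 by rewrite (F_eq I1) (S_eq I1) !inE eqxx orbT.
have xA' : xk k1 \notin A' by rewrite !inE negb_or x_ne_j // xk_notB.
have cA' : #|A'| = d.
  rewrite cardsU1 notin_B //; case: (in_I3 I1) => _ _ ->; exact: ar5.
case: (boolP [exists k', F k' :&: F k1 == A']) => [/existsP [k' /eqP E]|H].
  have Bk' : B k1 \subset F k'.
    by apply: subset_trans (subsetIl _ (F k1)); rewrite E subsetUr.
  have xk' : xk k1 \notin F k'.
    by apply/negP => h; move: xA'; rewrite -E inE h xF.
  have j1 : jk k1 \in F k'.
    have : jk k1 \in F k' :&: F k1 by rewrite E !inE eqxx.
    by rewrite inE => /andP [].
  have j2 : jk k2 \in F k'.
    have Bk2 : B k2 \subset F k' by rewrite B12.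
    by move: (coloring I2' Bk2); rewrite -x12 (negbTE xk').
  have j3 : jk k3 \in F k'.
    have Bk3 : B k3 \subset F k' by rewrite B13.
    by move: (coloring I3' Bk3); rewrite -x13 (negbTE xk').
  have sub : jk k1 |: (jk k2 |: (jk k3 |: B k1)) \subset F k'.
    by apply/subsetP => y; rewrite !inE => /or4P [/eqP->|/eqP->|/eqP->|/(subsetP Bk')].
  move: (subset_leq_card sub); rewrite (cardsU1 (jk k1)) (cardsU1 (jk k2)) (cardsU1 (jk k3)) Fcard !in_setU1 (negbTE j12) (negbTE j13) (negbTE j23) (negbTE (notin_B I1 I1)) (negbTE (notin_B I2' I1)) (negbTE (notin_B I3' I1)).
  case: (in_I3 I1) => _ _ ->; apply: ar2; exact: ltnW.

have : admissible F k1 A'.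
  split; first by rewrite properEneq A'F andbT; apply/eqP => E; move: xA'; rewrite E xF.
  by move=> k' E; move: H => /existsP; apply; exists k'; rewrite E.
move/maxB; rewrite cA'; case: (in_I3 I1) => _ _ ->; apply: ar1; exact: ltnW.
Qed.

Definition tS S := [set k in I3 | Sk k == S].

Lemma in_tS k S : (k \in tS S) = (k \in I3) && (Sk k == S).
Proof. by rewrite /tS in_set. Qed.

Lemma tS_le S : #|tS S| <= 2 * d.
Proof.
case: (set_0Vmem (tS S)) => [->|[k0]]; first by rewrite cards0.
rewrite inE => /andP [k0I /eqP <-].
rewrite -(Sk_card k0I) -[#|tS _|]mul1n.
apply: (@dc_bound _ _ _ _ (fun k y => xk k == y)) => [k|y yS].
  rewrite inE => /andP [kI /eqP E]; apply/card_gt0P; exists (xk k).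
  by rewrite in_set eqxx andbT -E (S_eq kI) setU11.
rewrite leqNgt; apply/negP => /three_elems [a [b [c [aX bX cX [nab nac nbc]]]]].
move: aX bX cX; rewrite in_set in_tS => /andP [/andP [aI /eqP Sa] /eqP xa].
rewrite in_set in_tS => /andP [/andP [bI /eqP Sb] /eqP xb].
rewrite in_set in_tS => /andP [/andP [cI /eqP Sc] /eqP xc].
apply: (fiber3 aI bI cI nab nac nbc); congruence.
Qed.

Definition Mult := [set S in Im3 | 1 < #|tS S|].

Lemma I3_bound : #|I3| <= #|Im3| + (2 * d).-1 * #|Mult|.
Proof.
have step1 : #|I3| <= \sum_(S in Im3) #|tS S|.
  rewrite -dcount -sum1_card; apply: leq_sum => k kI; apply/card_gt0P; exists (Sk k).
  by rewrite !inE eqxx andbT; apply/imsetP; exists k.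
apply: leq_trans step1 _.
have step2 : forall S, S \in Im3 -> #|tS S| <= 1 + (2 * d).-1 * (S \in Mult).
  move=> S SI; rewrite inE SI /=; case: ltnP => h; last by rewrite muln0 addn0.
  by rewrite /= muln1 add1n prednK ?tS_le // muln_gt0 /= (ltnW d2).
apply: (@leq_trans (\sum_(S in Im3) (1 + (2 * d).-1 * (S \in Mult)))).
  by apply: leq_sum.
rewrite big_split /= sum1_card leq_add2l -big_distrr /= leq_mul2l; apply/orP; right.
rewrite -sum1_card [X in _ <= X]big_mkcond [X in X <= _]big_mkcond /=.
apply: eq_leq; apply: eq_bigr => S _; case: (boolP (S \in Mult)) => h; last by case: (S \in Im3).
by move: (h); rewrite /Mult in_set => /andP [-> _].
Qed.

Definition P1 := [set S in Im3 | [exists k1, exists k2, [&& k1 \in I3, k2 \in I3, k1 != k2,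
   Sk k1 == S, Sk k2 == S & xk k1 == xk k2]]].
Definition P2 := [set S in Im3 | [exists k1, exists k2, [&& k1 \in I3, k2 \in I3, k1 != k2,
   Sk k1 == S, Sk k2 == S & xk k1 != xk k2]]].

Lemma Mult_P12 : #|Mult| <= #|P1| + #|P2|.
Proof.
apply: leq_trans (leq_card_setU P1 P2).1 ; apply: subset_leq_card; apply/subsetP => S.
rewrite in_set => /andP [SI /card_gt1P [k1 [k2 [h1 h2 n12]]]].
move: h1 h2; rewrite !in_tS => /andP [I1 /eqP S1] /andP [I2' /eqP S2].
rewrite in_setU !in_set SI /=; apply/orP.
case: (boolP (xk k1 == xk k2)) => hx; [left|right]; apply/existsP; exists k1; apply/existsP; exists k2;
  by rewrite I1 I2' n12 S1 S2 eqxx hx.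
Qed.

Lemma one_J k'' a b : #|F k'' :&: J| == 1 -> a \in F k'' -> b \in F k'' -> a \in J -> b \in J -> a = b.
Proof.
move=> /cards1P [c E] aF bF aJ bJ.
have : a \in F k'' :&: J by rewrite inE aF aJ.
have : b \in F k'' :&: J by rewrite inE bF bJ.
by rewrite E !inE => /eqP -> /eqP ->.
Qed.

Definition case1 (A S : {set 'I_n}) := [exists k1, exists k2, [&& k1 \in I3, k2 \in I3, k1 != k2,
   Sk k1 == S, Sk k2 == S, xk k1 == xk k2 & B k1 == A]].

Lemma case1P A S : case1 A S -> exists k1 k2, [/\ k1 \in I3, k2 \in I3, jk k1 != jk k2,
   Sk k1 = S & [/\ Sk k2 = S, xk k1 = xk k2, B k1 = A & B k2 = A]].
Proof.
move=> /existsP [k1 /existsP [k2 /and5P [I1 I2' n12 /eqP S1 /and3P [/eqP S2 /eqP x12 /eqP BA]]]].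
exists k1, k2; split => //.
- by apply/eqP => E; move: n12; rewrite (same_S_j I1 I2' (etrans S1 (esym S2)) E) eqxx.
- by split => //; rewrite -BA (B_eq I1) (B_eq I2') S1 S2 x12.
Qed.

Lemma case1_nonedge A S y : case1 A S -> y \in V -> y \notin S -> y |: A \notin edges_G F J.
Proof.
move=> /case1P [k1 [k2 [I1 I2' nj S1 [S2 x12 B1 B2]]]] yV yS.
apply/negP => /imsetP [k'']; rewrite inE => c1 E.
have AF : A \subset F k'' by apply: subset_trans (subsetUr [set y] A) _; rewrite E subsetDl.
have xn : xk k1 \notin F k''.
  apply/negP => h; have : xk k1 \in F k'' :\: J.
    by rewrite in_setD h andbT; move: (xk_V I1); rewrite /V in_setC.
  rewrite -E in_setU1 -B1 (negbTE (xk_notB I1)) orbF => /eqP E'.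
  by move: yS; rewrite -E' -S1 (S_eq I1) setU11.
have j1 : jk k1 \in F k''.
  have Bk : B k1 \subset F k'' by rewrite B1.
  by move: (coloring I1 Bk); rewrite (negbTE xn).
have j2 : jk k2 \in F k''.
  have Bk : B k2 \subset F k'' by rewrite B2.
  by move: (coloring I2' Bk); rewrite -x12 (negbTE xn).
by move: nj; rewrite (one_J c1 j1 j2 (jk_FJ I1).2 (jk_FJ I2').2) eqxx.
Qed.

Lemma case1_S A S : case1 A S -> exists k1, [/\ k1 \in I3, Sk k1 = S, B k1 = A & S = xk k1 |: A].
Proof.
move=> /case1P [k1 [k2 [I1 I2' nj S1 [S2 x12 B1 B2]]]]; exists k1; split => //.
by rewrite -S1 (S_eq I1) B1.
Qed.

Lemma case1_inj A S S' : case1 A S -> case1 A S' -> S = S'.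
Proof.
move=> h h'; case: (case1_S h) => [k1 [I1 S1 B1 E1]]; case: (case1_S h') => [k1' [I1' S1' B1' E1']].
case: (eqVneq (xk k1) (xk k1')) => [ex|nx]; first by rewrite E1 E1' ex.
have nS : xk k1' \notin S.
  by rewrite E1 in_setU1 eq_sym (negbTE nx) /= -B1' (xk_notB I1').
move: (case1_nonedge h (xk_V I1') nS); rewrite -E1' -S1' (S_edge I1') //.
Qed.

Lemma P1_case1 S : S \in P1 -> exists A, case1 A S.
Proof.
rewrite in_set => /andP [_ /existsP [k1 /existsP [k2 /and5P [I1 I2' n12 S1 /andP [S2 x12]]]]].
by exists (B k1); apply/existsP; exists k1; apply/existsP; exists k2; rewrite I1 I2' n12 S1 S2 x12 eqxx.
Qed.

Lemma S_sub_V k : k \in I3 -> Sk k \subset V.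
Proof. by move/S_Dsets; rewrite in_set => /andP []. Qed.

Lemma P1_bound : (#|V| - d) * #|P1| <= d * #|NE|.
Proof.
apply: (@dc_bound _ _ _ _ (fun S D => case1 (S :&: D) S)) => [S /P1_case1 [A h]|D DNE].
  case: (case1_S h) => [k1 [I1 S1 B1 E1]].
  have AS : A \subset S by rewrite -B1 -S1 B_sub_S.
  have SV : S \subset V by rewrite -S1 S_sub_V.
  have inj : {in V :\: S &, injective (fun y => y |: A)}.
    move=> y y' yin y'in E; have : y \in y' |: A by rewrite -E setU11.
    rewrite in_setU1 => /orP [/eqP //|yA].
    by move: yin; rewrite in_setD (subsetP AS _ yA).
  have cVS : #|V :\: S| = #|V| - d.
    by rewrite cardsD (setIidPr SV) -S1 Sk_card.
  rewrite -cVS -(card_in_imset inj); apply: subset_leq_card; apply/subsetP => D /imsetP [y yin ->].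
  move: yin; rewrite in_setD => /andP [yS yV].
  have SD : S :&: (y |: A) = A.
    rewrite setIUr (setIidPr AS); apply/setP => z; rewrite !inE.
    case: (eqVneq z y) => [->|]; by rewrite ?(negbTE yS) //= andbF.
  rewrite in_set SD h andbT in_set (case1_nonedge h yV yS) andbT in_set.
  rewrite subUset sub1set yV (subset_trans AS SV) /= cardsU1.
  rewrite (contra (subsetP AS y)) // -B1; case: (in_I3 I1) => _ _ ->.
  by rewrite add1n prednK // ltnW.
have inj : {in [set S in P1 | case1 (S :&: D) S] &, injective (fun S => S :&: D)}.
  move=> S S'; rewrite !in_set => /andP [_ h] /andP [_ h'] E.
  by apply: case1_inj h _; rewrite E.
rewrite -(card_in_imset inj).
have cD : #|D| = d by move: DNE; rewrite !in_set => /andP [/andP [_ /eqP]].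
apply: (@leq_trans #|[set A : {set 'I_n} | A \subset D & #|A| == d.-1]|).
  apply: subset_leq_card; apply/subsetP => A /imsetP [S]; rewrite in_set => /andP [_ h] ->.
  rewrite in_set subsetIr /=; case: (case1_S h) => [k1 [I1 _ <- _]].
  by case: (in_I3 I1) => _ _ ->.
by rewrite cards_draws cD -subn1 bin_sub ?bin1 // ltnW.
Qed.

Definition QZ (Z : {set 'I_n}) := [set S in Im3 | [exists k1, exists k2, [&& k1 \in I3, k2 \in I3,
   Sk k1 == S, Sk k2 == S, xk k1 != xk k2 & Z == S :\: [set xk k1; xk k2]]]].

Definition col (Z : {set 'I_n}) u v a := forall k', u |: Z \subset F k' -> (v \in F k') || (a \in F k').

Lemma xk_S k : k \in I3 -> xk k \in Sk k.
Proof. by move=> kI; rewrite (S_eq kI) setU11. Qed.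

Lemma QZ_two Z S : S \in QZ Z -> exists k1 k2, [/\ k1 \in I3, k2 \in I3, Sk k1 = S, Sk k2 = S &
  [/\ jk k1 != jk k2, xk k1 != xk k2 & Z = S :\: [set xk k1; xk k2]]].
Proof.
rewrite in_set => /andP [_ /existsP [k1 /existsP [k2 /and5P [I1 I2' /eqP S1 /eqP S2 /andP [nx /eqP EZ]]]]].
exists k1, k2; split => //; split => //.
apply/eqP => E; move: nx; rewrite (same_S_j I1 I2' (etrans S1 (esym S2)) E) eqxx //.
Qed.

Lemma QZ_struct Z S : S \in QZ Z -> exists u v a b, [/\ S = u |: (v |: Z), u != v, u \notin Z, v \notin Z &
  [/\ u \in V, v \in V, a != b, a \in J & [/\ b \in J, col Z u v a & col Z v u b]]].
Proof.
move=> /QZ_two [k1 [k2 [I1 I2' S1 S2 [nj nx EZ]]]].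
have x1S : xk k1 \in S by rewrite -S1 xk_S.
have x2S : xk k2 \in S by rewrite -S2 xk_S.
case: (setD2_eq x1S x2S nx) => E1 E2.
have nx' : xk k2 != xk k1 by rewrite eq_sym.
case: (setD2_eq x2S x1S nx') => E1' _.
have e21 : [set xk k2; xk k1] = [set xk k1; xk k2] by rewrite setUC.
exists (xk k2), (xk k1), (jk k1), (jk k2); split.
- by rewrite {1}E2 EZ.
- by rewrite eq_sym.
- by rewrite EZ !inE eqxx orbT.
- by rewrite EZ !inE eqxx.
split; [exact: xk_V | exact: xk_V | exact: nj | exact: (jk_FJ I1).2 | split].
- exact: (jk_FJ I2').2.
- move=> k' h; apply: coloring => //; by rewrite (B_eq I1) S1 E1 -EZ.
- move=> k' h; apply: coloring => //; by rewrite (B_eq I2') S2 E1' e21 -EZ.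
Qed.

Lemma QZ_in Z S : S \in QZ Z -> [/\ S \in edges_G F J, #|S| = d, S \subset V & Z \subset S].
Proof.
move=> /QZ_two [k1 [k2 [I1 I2' S1 S2 [nj nx EZ]]]].
split; [by rewrite -S1 S_edge | by rewrite -S1 Sk_card | by rewrite -S1 S_sub_V | by rewrite EZ subsetDl].
Qed.

Lemma QZ_Zcard Z S : S \in QZ Z -> #|Z| = d - 2.
Proof.
move=> h; case: (QZ_in h) => _ cS _ _; case: (QZ_struct h) => [u [v [a [b [E nuv uZ vZ _]]]]].
move: cS; rewrite E !cardsU1 in_setU1 (negbTE nuv) (negbTE uZ) (negbTE vZ) => <-.
by rewrite add1n add1n subn2.
Qed.

Lemma col_edge Z u v a k : #|F k :&: J| == 1 -> col Z u v a -> u |: Z \subset F k :\: J ->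
  v \in V -> v \notin F k :\: J -> a \in J -> a \in F k.
Proof.
move=> c1 cl sub vV vn aJ; move: (cl k (subset_trans sub (subsetDl _ _))).
case/orP => // vF; move: vn; rewrite in_setD vF andbT; move: vV; by rewrite /V in_setC => ->.
Qed.

Lemma col_I3 Z u v a k : k \in I3 -> col Z u v a -> u |: Z \subset Sk k ->
  v \in V -> v \notin Sk k -> a \in J -> a = jk k.
Proof.
move=> kI cl sub vV vn aJ; have c1 : #|F k :&: J| == 1 by case: (in_I3 kI) => ->.
have aF := col_edge c1 cl sub vV vn aJ.
exact: (one_J c1 aF (jk_FJ kI).1 aJ (jk_FJ kI).2).
Qed.

Lemma share1 Z S S' u v a : S \in QZ Z -> S = u |: (v |: Z) -> col Z u v a -> a \in J -> v \in V ->
  S' \in QZ Z -> u \in S' -> S = S'.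
Proof.
move=> SQ E cl aJ vV S'Q uS'.
case: (QZ_in SQ) => _ cS _ _; case: (QZ_in S'Q) => _ cS' _ ZS'.
case: (boolP (v \in S')) => vS'.
  apply/eqP; rewrite eqEcard cS cS' leqnn andbT E.
  by rewrite !subUset !sub1set uS' vS' ZS'.
case: (QZ_two S'Q) => [k1 [k2 [I1 I2' S1 S2 [nj _ _]]]].
have sub : u |: Z \subset S' by rewrite subUset sub1set uS' ZS'.
have e1 : a = jk k1 by apply: (col_I3 I1 cl) => //; rewrite S1.
have e2 : a = jk k2 by apply: (col_I3 I2' cl) => //; rewrite S2.
by move: nj; rewrite -e1 -e2 eqxx.
Qed.

Lemma share Z S S' p : S \in QZ Z -> S' \in QZ Z -> p \in S -> p \in S' -> p \notin Z -> S = S'.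
Proof.
move=> SQ S'Q pS pS' pZ; case: (QZ_struct SQ) => [u [v [a [b [E nuv uZ vZ [uV vV nab aJ [bJ c1 c2]]]]]]].
move: (pS); rewrite {1}E !in_setU1 (negbTE pZ) orbF => /orP [/eqP pu|/eqP pv].
  by apply: (share1 SQ E c1 aJ vV S'Q); rewrite -pu.
by apply: (share1 SQ (etrans E (setUCA _ _ _)) c2 bJ uV S'Q); rewrite -pv.
Qed.

Lemma NE_card D : D \in NE -> #|D| = d /\ D \subset V.
Proof. by rewrite !in_set => /andP [/andP [DV /eqP cD] _]. Qed.

Lemma no_three Z S1 S2 S3 D : S1 \in QZ Z -> S2 \in QZ Z -> S3 \in QZ Z ->
  S1 != S2 -> S1 != S3 -> S2 != S3 -> D \in NE -> Z \subset D ->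
  #|(D :\: Z) :&: S1| == 1 -> #|(D :\: Z) :&: S2| == 1 -> #|(D :\: Z) :&: S3| == 1 -> False.
Proof.
move=> Q1 Q2 Q3 n12 n13 n23 DNE ZD /cards1P [p1 E1] /cards1P [p2 E2] /cards1P [p3 E3].
have h1 : p1 \in (D :\: Z) :&: S1 by rewrite E1 set11.
have h2 : p2 \in (D :\: Z) :&: S2 by rewrite E2 set11.
have h3 : p3 \in (D :\: Z) :&: S3 by rewrite E3 set11.
move: h1 h2 h3; rewrite !in_setI !in_setD => /andP [/andP [p1Z p1D] p1S] /andP [/andP [p2Z p2D] p2S] /andP [/andP [p3Z p3D] p3S].
have ne Si Sj pi pj : Si \in QZ Z -> Sj \in QZ Z -> Si != Sj -> pi \in Si -> pj \in Sj -> pi \notin Z -> pi != pj.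
  move=> Qi Qj nij piS pjS piZ; apply/eqP => E; have piSj : pi \in Sj by rewrite E.
  by move: nij; rewrite (share Qi Qj piS piSj piZ) eqxx.
apply: (three_in_two (X := D :\: Z) (a := p1) (b := p2) (c := p3)).
- by rewrite in_setD p1Z p1D.
- by rewrite in_setD p2Z p2D.
- by rewrite in_setD p3Z p3D.
- exact: ne Q1 Q2 n12 p1S p2S p1Z.
- exact: ne Q1 Q3 n13 p1S p3S p1Z.
- exact: ne Q2 Q3 n23 p2S p3S p2Z.
rewrite cardsD (setIidPr ZD) (NE_card DNE).1 (QZ_Zcard Q1).
by apply: ar6.
Qed.

Lemma cand Z S S' w u' : S \in QZ Z -> S' \in QZ Z -> w \in S -> w \notin Z -> w \notin S' ->
  u' \in S' -> u' \notin Z -> u' \notin S -> w |: (u' |: Z) \notin edges_G F J ->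
  exists D, [/\ D \in NE, Z \subset D, #|(D :\: Z) :&: S| == 1 & #|(D :\: Z) :&: S'| == 1].
Proof.
move=> SQ S'Q wS wZ wS' uS' uZ uS ne; exists (w |: (u' |: Z)).
case: (QZ_in SQ) => _ _ SV ZS; case: (QZ_in S'Q) => _ _ S'V _.
split.
- rewrite in_set ne andbT in_set !subUset !sub1set (subsetP SV _ wS) (subsetP S'V _ uS') (subset_trans ZS SV) /=.
  have wu : w != u' by apply/eqP => E; move: uS; rewrite -E wS.
  rewrite !cardsU1 !in_setU1 (negbTE wu) (negbTE wZ) (negbTE uZ) (QZ_Zcard SQ).
  exact: ar7.
- exact: subset_trans (subsetUr [set u'] Z) (subsetUr _ _).
- by rewrite pair_inter // cards1.
- by rewrite setUCA pair_inter // cards1.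
Qed.

Lemma cross Z S S' : S \in QZ Z -> S' \in QZ Z -> S != S' ->
  exists D, [/\ D \in NE, Z \subset D, #|(D :\: Z) :&: S| == 1 & #|(D :\: Z) :&: S'| == 1].
Proof.
move=> SQ S'Q nSS.
case: (QZ_struct SQ) => [u [v [a [b [E nuv uZ vZ [uV vV nab aJ [bJ c1 c2]]]]]]].
case: (QZ_struct S'Q) => [u' [v' [a' [b' [E' nuv' uZ' vZ' [uV' vV' nab' aJ' [bJ' c1' c2']]]]]]].
have uS : u \in S by rewrite E !inE eqxx.
have vS : v \in S by rewrite E !inE eqxx orbT.
have uS' : u' \in S' by rewrite E' !inE eqxx.
have vS' : v' \in S' by rewrite E' !inE eqxx orbT.
have nsh p : p \in S -> p \in S' -> p \notin Z -> False.
  by move=> h1 h2 h3; move: nSS; rewrite (share SQ S'Q h1 h2 h3) eqxx.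
have u'S : u' \notin S by apply/negP => h; exact: nsh u' h uS' uZ'.
have v'S : v' \notin S by apply/negP => h; exact: nsh v' h vS' vZ'.
have uS'n : u \notin S' by apply/negP => h; exact: nsh u uS h uZ.
have vS'n : v \notin S' by apply/negP => h; exact: nsh v vS h vZ.
case: (boolP (u |: (u' |: Z) \in edges_G F J)) => e1; last exact: cand SQ S'Q uS uZ uS'n uS' uZ' u'S e1.
case: (boolP (v |: (u' |: Z) \in edges_G F J)) => e2; last exact: cand SQ S'Q vS vZ vS'n uS' uZ' u'S e2.
exfalso.
have ne_pS p q : p \in S -> q \notin S -> p != q by move=> h1 h2; apply/eqP => E0; move: h2; rewrite -E0 h1.
have ne_pS' p q : p \in S' -> q \notin S' -> p != q by move=> h1 h2; apply/eqP => E0; move: h2; rewrite -E0 h1.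
move: e1 => /imsetP [k1]; rewrite in_set => cJ1 E1.
move: e2 => /imsetP [k2]; rewrite in_set => cJ2 E2.
have s1 w : w |: Z \subset w |: (u' |: Z) by apply: setUS; exact: subsetUr.
have s2 w : u' |: Z \subset w |: (u' |: Z) by exact: subsetUr.
have a1 : a \in F k1.
  apply: (col_edge cJ1 c1) => //; first by rewrite -E1.
  by rewrite -E1 !in_setU1 (negbTE vZ) eq_sym (negbTE nuv) (negbTE (ne_pS _ _ vS u'S)).
have a1' : a' \in F k1.
  apply: (col_edge cJ1 c1') => //; first by rewrite -E1.
  by rewrite -E1 !in_setU1 (negbTE vZ') (negbTE (ne_pS' _ _ vS' uS'n)) eq_sym (negbTE nuv').
have b2 : b \in F k2.
  apply: (col_edge cJ2 c2) => //; first by rewrite -E2.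
  by rewrite -E2 !in_setU1 (negbTE uZ) (negbTE nuv) (negbTE (ne_pS _ _ uS u'S)).
have a2' : a' \in F k2.
  apply: (col_edge cJ2 c1') => //; first by rewrite -E2.
  by rewrite -E2 !in_setU1 (negbTE vZ') (negbTE (ne_pS' _ _ vS' vS'n)) eq_sym (negbTE nuv').
have := one_J cJ1 a1 a1' aJ aJ'; have := one_J cJ2 b2 a2' bJ aJ'.
by move=> eb ea; move: nab; rewrite eb ea eqxx.
Qed.

Definition NZ (Z : {set 'I_n}) := [set D in NE | Z \subset D].

Lemma QZ_sq Z : (#|QZ Z| - 1) * #|QZ Z| <= 2 * #|NZ Z|.
Proof.
apply: (@dc_bound _ _ _ _ (fun S D => #|(D :\: Z) :&: S| == 1)) => [S SQ|D DN].
  rewrite (cardsD1 S) SQ add1n subn1 /= -[#|QZ Z :\ S|]mul1n -[X in _ <= X]mul1n.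
  apply: (@dc_bound _ _ _ _ (fun S' D => #|(D :\: Z) :&: S'| == 1)) => [S' S'Q|D DY].
    move: S'Q; rewrite in_setD1 => /andP [nS S'Q].
    have nS' : S != S' by rewrite eq_sym.
    case: (cross SQ S'Q nS') => D [DNE ZD r1 r2].
    apply/card_gt0P; exists D; rewrite in_set r2 andbT in_set r1 andbT /NZ in_set DNE ZD //.
  rewrite leqNgt; apply/negP => /card_gt1P [S1 [S2 [h1 h2 n12]]].
  move: h1; rewrite in_set in_setD1 => /andP [/andP [n1 Q1] r1].
  move: h2; rewrite in_set in_setD1 => /andP [/andP [n2 Q2] r2].
  move: DY; rewrite in_set /NZ in_set => /andP [/andP [DNE ZD] r].
  by apply: (no_three SQ Q1 Q2 _ _ n12 DNE ZD r r1 r2); rewrite eq_sym.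
rewrite leqNgt; apply/negP => /three_elems [S1 [S2 [S3 [h1 h2 h3 [n12 n13 n23]]]]].
move: h1; rewrite in_set => /andP [Q1 r1]; move: h2; rewrite in_set => /andP [Q2 r2].
move: h3; rewrite in_set => /andP [Q3 r3]; move: DN; rewrite /NZ in_set => /andP [DNE ZD].
exact: (no_three Q1 Q2 Q3 n12 n13 n23 DNE ZD r1 r2 r3).
Qed.

Definition Zs := [set Z : {set 'I_n} | (Z \subset V) && (#|Z| == d - 2)].

Lemma P2_QZ S : S \in P2 -> exists Z, (Z \in Zs) && (S \in QZ Z).
Proof.
rewrite in_set => /andP [SI /existsP [k1 /existsP [k2 /and5P [I1 I2' n12 S1 /andP [S2 nx]]]]].
have SQ : S \in QZ (S :\: [set xk k1; xk k2]).
  rewrite in_set SI /=; apply/existsP; exists k1; apply/existsP; exists k2.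
  by rewrite I1 I2' S1 S2 nx eqxx.
exists (S :\: [set xk k1; xk k2]); rewrite SQ andbT in_set (QZ_Zcard SQ) eqxx andbT.
case: (QZ_in SQ) => _ _ SV _; exact: subset_trans (subsetDl _ _) SV.
Qed.

Lemma P2_sum : #|P2| <= \sum_(Z in Zs) #|QZ Z|.
Proof.
apply: (@leq_trans (\sum_(S in P2) #|[set Z in Zs | S \in QZ Z]|)).
  rewrite -sum1_card; apply: leq_sum => S /P2_QZ [Z h]; apply/card_gt0P; exists Z.
  by rewrite in_set.
rewrite (dcount _ _ (fun S Z => S \in QZ Z)); apply: leq_sum => Z _.
by apply: subset_leq_card; apply/subsetP => S; rewrite in_set => /andP [].
Qed.

Lemma NZ_sum : \sum_(Z in Zs) #|NZ Z| <= 'C(d, d - 2) * #|NE|.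
Proof.
rewrite /NZ (dcount _ _ (fun Z D : {set 'I_n} => Z \subset D)) mulnC -sum_nat_const; apply: leq_sum => D DNE.
rewrite -(NE_card DNE).1 -cards_draws; apply: subset_leq_card; apply/subsetP => Z.
by rewrite in_set => /andP [ZZ ZD]; move: ZZ; rewrite /Zs in_set => /andP [_ cZ]; rewrite in_set ZD (NE_card DNE).1 cZ.
Qed.

Lemma P2_bound L : L * #|P2| <= #|Zs| * (L + L * L) + 2 * ('C(d, d - 2) * #|NE|).
Proof.
apply: (@leq_trans (\sum_(Z in Zs) (L + L * L + 2 * #|NZ Z|))).
  apply: (@leq_trans (\sum_(Z in Zs) L * #|QZ Z|)).
    by rewrite -big_distrr /= leq_mul2l P2_sum orbT.
  by apply: leq_sum => Z _; apply: nat_lam; exact: QZ_sq.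
rewrite big_split /= sum_nat_const mulnC leq_add2l -big_distrr /= leq_mul2l NZ_sum orbT //.
Qed.

Lemma tot_bound : #|T2 F B J d :|: T3 F B J d| <= 'C(n - #|J|, d) + (2 * d).-1 * (#|P1| + #|P2|).
Proof.
apply: leq_trans (leq_card_setU _ _).1 _.
have h2 : #|T2 F B J d| <= #|I2|.
  rewrite /T2; apply: leq_trans (leq_imset_card _ _) _. rewrite /I2 cardsE; by [].
have h3 : #|T3 F B J d| <= #|I3|.
  rewrite /T3; apply: leq_trans (leq_imset_card _ _) _; rewrite /I3 cardsE; by [].
apply: leq_trans (leq_add h2 h3) _.
apply: leq_trans (leq_add (leqnn _) I3_bound) _.
rewrite addnA; apply: leq_add; first exact: main1.
by rewrite leq_mul2l Mult_P12 orbT.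
Qed.
End Main.

Lemma exp_mono a b k : a <= b -> a ^ k <= b ^ k.
Proof. move=> h; elim: k => [|k IH]; first by []. by rewrite !expnS leq_mul. Qed.

Lemma ar_n d n j v : 4 * d <= n -> 4 * j <= n -> v = n - j -> n <= 2 * (v - d).
Proof. lia. Qed.
Lemma ar_d1 d : 2 <= d -> d - 1 = (d - 2).+1.
Proof. lia. Qed.
Lemma P1_nat n P1 NE V d : (V - d) * P1 <= d * NE -> n <= 2 * (V - d) -> n * P1 <= 2 * d * NE.
Proof.
move=> h1 h2; apply: leq_trans (leq_mul h2 (leqnn _)) _; rewrite -mulnA -mulnA leq_mul2l h1 orbT //.
Qed.
Lemma P2_nat (Zs C NE P2 w d : nat) L : (forall L, L * P2 <= Zs * (L + L * L) + 2 * (C * NE)) ->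
  Zs <= w -> C <= d * d -> L * P2 <= w * (L + L * L) + 2 * (d * d * NE).
Proof.
move=> h HZ HC; apply: leq_trans (h L) _; apply: leq_add; first exact: leq_mul.
by apply: leq_mul => //; apply: leq_mul.
Qed.
Lemma ar_2d d : 2 <= d -> (2 * d).-1 = 2 * d - 1.
Proof. lia. Qed.

Open Scope R_scope.
Lemma INRD a b : INR (addn a b) = INR a + INR b. Proof. exact: plus_INR. Qed.
Lemma INRM a b : INR (muln a b) = INR a * INR b. Proof. exact: mult_INR. Qed.
Lemma INRle a b : leq a b -> INR a <= INR b. Proof. by move/leP; exact: le_INR. Qed.
Lemma INRX a k : INR (expn a k) = INR a ^ k.
Proof. elim: k => [|k IH] //=; by rewrite expnS INRM IH. Qed.
Lemma INR_pred2 d : leq 1 d -> INR (predn (muln 2 d)) = 2 * INR d - 1.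
Proof.
move=> d0; have h : S (predn (muln 2 d)) = muln 2 d by rewrite prednK // muln_gt0.
have := S_INR (predn (muln 2 d)); rewrite h INRM => ->; simpl; ring.
Qed.

Lemma real_final (D nR K w s T Bn P1 P2 NE L : R) :
 2 <= D -> 0 < nR -> 0 <= K -> 1 <= w -> 0 <= s -> s*s = K*nR*w ->
 0 <= P1 -> 0 <= P2 -> 0 <= NE ->
 T <= Bn + (2*D - 1)*(P1+P2) ->
 nR * P1 <= 2*D*NE -> NE <= K*nR ->
 L*P2 <= w*(L + L*L) + 2*(D*D)*NE ->
 s < L*w -> L*w <= s + w ->
 T <= Bn + (4*D^3 + 4*D)*(K + s + w).
Proof.
intros hD hn hK hw hs hss h1 h2 hNE hT hP1 hNEK hP2 hL1 hL2.
assert (P1K : P1 <= 2*D*K).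
{ apply Rmult_le_reg_l with nR; [lra|]. nra. }
assert (hLp : 0 < L) by nra.
assert (hKL : K*nR <= L*s).
{ apply Rmult_le_reg_l with w; [lra|].
  assert (s*s <= s*(L*w)) by nra. nra. }
assert (hP2b : P2 <= w*(1+L) + 2*(D*D)*s).
{ apply Rmult_le_reg_l with L; [lra|].
  assert (2*(D*D)*NE <= 2*(D*D)*(L*s)) by nra. nra. }
assert (hP2c : P2 <= 2*w + s + 2*(D*D)*s) by nra.
assert (hsum : (2*D-1)*(P1+P2) <= (2*D-1)*(2*D*K + (2*w + s + 2*(D*D)*s))).
{ apply Rmult_le_compat_l; lra. }
assert ((2*D-1)*(2*D*K + (2*w + s + 2*(D*D)*s)) <= (4*D^3 + 4*D)*(K + s + w)).
{ assert (E : (4*D^3 + 4*D)*(K + s + w) - (2*D-1)*(2*D*K + (2*w + s + 2*(D*D)*s)) =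
     (4*D^3 - 4*D^2 + 6*D)*K + (2*D*D + 2*D + 1)*s + (4*D^3+2)*w) by ring.
  assert (c1 : 0 <= (4*D^3 - 4*D^2 + 6*D)*K).
  { apply Rmult_le_pos; [|lra]. simpl. nra. }
  assert (c2 : 0 <= (2*D*D + 2*D + 1)*s) by (apply Rmult_le_pos; nra).
  assert (c3 : 0 <= (4*D^3+2)*w) by (apply Rmult_le_pos; [simpl; nra|lra]).
  lra. }
lra.
Qed.

Close Scope R_scope.

From mathcomp Require Import all_boot.
From Stdlib Require Import Reals.

Theorem claim3p9 :
  forall d : nat, (2 <= d)%N ->
  exists C : R, (0 < C)%R /\
  exists n0 : nat, forall n : nat, (n0 <= n)%N ->
  forall (m : nat) (F B : 'I_m -> {set 'I_n}) (J : {set 'I_n}) (K : R),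
    injective F ->
    (forall i, #|F i| = d.+1) ->
    VCdim_le F d ->
    (forall i, admissible F i (B i)) ->
    (forall i (B' : {set 'I_n}), admissible F i B' -> (#|B'| <= #|B i|)%N) ->
    (4 * #|J| <= n)%N ->
    (0 <= K)%R ->
    (INR #|edges_G F J| >= INR 'C(n - #|J|, d) - K * INR n)%R ->
    (INR #|T2 F B J d :|: T3 F B J d|
      <= INR 'C(n - #|J|, d)
         + C * (K + sqrt (K * INR n ^ (d - 1)) + INR n ^ (d - 2)))%R.
Proof.
move=> d d2.
have dR : (2 <= INR d)%R by apply: (le_INR 2); apply/leP.
exists (4 * INR d ^ 3 + 4 * INR d)%R; split; first by simpl; nra.
exists (4 * d) => n hn m F B J K Finj Fcard _ adm maxB hJ hK hE.
case: n hn F B J hJ hE Finj Fcard adm maxB => [|n'] hn F B J hJ hE Finj Fcard adm maxB.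
  by move: hn; rewrite leqn0 muln_eq0 /= => /eqP d0; move: d2; rewrite d0.
pose z0 : 'I_n'.+1 := ord0.
have HT := tot_bound z0 J d2 Finj Fcard adm maxB.
have HP1 := P1_bound z0 J d2 Finj Fcard adm.
have HP2 := P2_bound z0 J d2 Finj Fcard adm.
have HNE := card_NE J Fcard.
have HV := card_V J.
have HZs : #|Zs d J| <= expn n'.+1 (d - 2).
  rewrite /Zs cards_draws; apply: leq_trans (bin_le_exp _ _) _; apply: exp_mono.
  by rewrite HV leq_subr.
have Hbin : 'C(d, d - 2) <= d * d.
  by rewrite bin_sub ?leq_subr // (leq_trans (bin_le_exp _ _)) // expnS expn1.
have H2V : n'.+1 <= 2 * (#|~: J| - d) by apply: ar_n hn hJ HV.
have d0 : 0 < d by apply: ltnW.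
have hT := @INRle _ _ HT; rewrite INRD INRM INR_pred2 // INRD in hT.
have hP1n := P1_nat HP1 H2V.
have hP1 := @INRle _ _ hP1n; rewrite !INRM in hP1.
have hNE : (INR #|NE d F J| <= K * INR n'.+1)%R.
  have := congr1 INR HNE; rewrite INRD => e; lra.
set nR := INR n'.+1 in hP1 hNE hE *.
have nR1 : (1 <= nR)%R by rewrite /nR S_INR; have := pos_INR n'; lra.
set w := (nR ^ (d - 2))%R.
set sR := sqrt (K * nR ^ (d - 1))%R.
have hw : (1 <= w)%R by apply: pow_R1_Rle.
have hs : (0 <= sR)%R by apply: sqrt_pos.
have hss : (sR * sR = K * nR * w)%R.
  rewrite /sR sqrt_sqrt; last by apply: Rmult_le_pos => //; apply: pow_le; lra.
  by rewrite /w (ar_d1 d2) /=; ring.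
pose L := Z.to_nat (up (sR / w)).
have [hu1 hu2] := archimed (sR / w).
have q0 : (0 <= sR / w)%R.
  rewrite /Rdiv; apply: Rmult_le_pos => //; apply: Rlt_le; apply: Rinv_0_lt_compat; lra.
have up_pos : (0 < up (sR / w))%Z by apply: lt_IZR; lra.
have hLI : INR L = IZR (up (sR / w)) by rewrite INR_IZR_INZ Znat.Z2Nat.id //; lia.
have es : (sR = (sR / w) * w)%R by field; lra.
have hL1 : (sR < INR L * w)%R by rewrite hLI; nra.
have hL2 : (INR L * w <= sR + w)%R by rewrite hLI; nra.
have hP2n := P2_nat L HP2 HZs Hbin.
have hP2 := @INRle _ _ hP2n; rewrite !INRD !INRM INRX -/nR -/w in hP2.
have i2 : INR 2 = 2%R by simpl; lra.
rewrite i2 in hP1 hP2.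
apply: (real_final (D := INR d) (nR := nR) (NE := INR #|NE d F J|) (L := INR L)
  (P1 := INR #|P1 d z0 F B J|) (P2 := INR #|P2 d z0 F B J|)) => //; try lra.
all: try exact: pos_INR.
rewrite INRD INRM (_ : INR 0 = 0%R) // in hP2; lra.
Qed.
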